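(* Let $\Lambda$ be a set and $\mathscr{G}=\hat\Lambda$ its groupoid of pairs. The following data on $\Lambda$ are equivalent (in bijective correspondence): (i) a group operation $*$ on $\Lambda$; (ii) a pointed heap structure on $\Lambda$, i.e. a heap structure together with a distinguished element $u\in\Lambda$; (iii) a pre-braiding $\sigma$ on $\mathscr{G}$ together with a distinguished vertex $u\in\Lambda$. The correspondences are: a group $(\Lambda,* )$ with unit $u$ gives the heap $\langle a,b,c\rangle=a*b^{-1}*c$ pointed at $u$; a pointed heap gives the group $a*b=\langle a,u,b\rangle$; a heap corresponds to the pre-braiding $\sigma([a,b]|[b,c])=[a,\langle a,b,c\rangle]|[\langle a,b,c\rangle,c]$. Under this correspondence, abelian groups correspond to involutive braidings, and thus to ternary operations satisfying $\langle a,\langle a,b,c\rangle,c\rangle=b$ for all $a,b,c$.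
   Context: The groupoid of pairs $\hat\Lambda$ has vertex set $\Lambda$ and one arrow $[a,b]\colon a\to b$ for each $(a,b)$, with $[a,b][b,c]=[a,c]$ and units $[a,a]$. For a groupoid $\mathscr{G}$ with multiplication $m$ and units $\mathbf{1}_\lambda$, a pre-braiding is a source/target-preserving map $\sigma\colon\mathscr{G}\otimes\mathscr{G}\to\mathscr{G}\otimes\mathscr{G}$ on composable pairs, $\sigma(x,y)=(x\rightharpoonup y,x\leftharpoonup y)$, such that for all composable $x|y|z$: $\sigma(x,\mathbf{1}_{\mathfrak{t}(x)})=(\mathbf{1}_{\mathfrak{s}(x)},x)$; $\sigma(\mathbf{1}_{\mathfrak{s}(x)},x)=(x,\mathbf{1}_{\mathfrak{t}(x)})$; $x\rightharpoonup yz=(x\rightharpoonup y)((x\leftharpoonup y)\rightharpoonup z)$, $x\leftharpoonup yz=(x\leftharpoonup y)\leftharpoonup z$; $xy\leftharpoonup z=(x\leftharpoonup(y\rightharpoonup z))(y\leftharpoonup z)$, $xy\rightharpoonup z=x\rightharpoonup(y\rightharpoonup z)$; and $m\circ\sigma=m$. A braiding is a bijective pre-braiding; involutive means $\sigma^2=\mathrm{id}$. A heap is a set with a ternary operation satisfying $\langle a,b,b\rangle=a$, $\langle a,a,b\rangle=b$, $\langle a,b,\langle c,d,e\rangle\rangle=\langle\langle a,b,c\rangle,d,e\rangle$. *)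

(* Defs.v *)
From mathcomp Require Import ssreflect ssrfun ssrbool.

Set Implicit Arguments.
Unset Strict Implicit.

Section Defs.
Variable L : Type.

(* A group structure on L: multiplication, unit, inverse (unit and inverse
   are uniquely determined by the multiplication). *)
Definition is_group (mul : L -> L -> L) (e : L) (inv : L -> L) : Prop :=
  (forall a b c, mul a (mul b c) = mul (mul a b) c) /\
  (forall a, mul e a = a) /\ (forall a, mul a e = a) /\
  (forall a, mul (inv a) a = e) /\ (forall a, mul a (inv a) = e).

Definition is_abelian (mul : L -> L -> L) : Prop := forall a b, mul a b = mul b a.

Definition is_heap (h : L -> L -> L -> L) : Prop :=
  (forall a b, h a b b = a) /\
  (forall a b, h a a b = b) /\
  (forall a b c d e, h a b (h c d e) = h (h a b c) d e).

Definition arrow := (L * L)%type.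
Definition src (x : arrow) : L := x.1.
Definition tgt (x : arrow) : L := x.2.
Definition idA (a : L) : arrow := (a, a).
(* composition [a,b][b,c] = [a,c], meaningful when tgt x = src y *)
Definition compA (x y : arrow) : arrow := (x.1, y.2).

(* A composable pair [a,b]|[b,c] of hat(L) is encoded by the triple (a,b,c);
   this is exactly the set  hat(L) (x) hat(L)  of composable pairs. *)
Definition cpair := (L * L * L)%type.
Definition fstA (p : cpair) : arrow := (p.1.1, p.1.2).
Definition sndA (p : cpair) : arrow := (p.1.2, p.2).
(* the composable pair x|y (assuming tgt x = src y) *)
Definition mkP (x y : arrow) : cpair := (x.1, x.2, y.2).

Definition lact (s : cpair -> cpair) (x y : arrow) : arrow := fstA (s (mkP x y)).
Definition ract (s : cpair -> cpair) (x y : arrow) : arrow := sndA (s (mkP x y)).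

(* pre-braiding on hat(L) : sigma(x,y) = (x -> y, x <- y) *)
Definition is_prebraiding (s : cpair -> cpair) : Prop :=
  (forall p, src (fstA (s p)) = src (fstA p) /\ tgt (sndA (s p)) = tgt (sndA p)) /\
  (forall x, s (mkP x (idA (tgt x))) = mkP (idA (src x)) x) /\
  (forall x, s (mkP (idA (src x)) x) = mkP x (idA (tgt x))) /\
  (forall x y z, tgt x = src y -> tgt y = src z ->
     lact s x (compA y z) = compA (lact s x y) (lact s (ract s x y) z) /\
     ract s x (compA y z) = ract s (ract s x y) z) /\
  (forall x y z, tgt x = src y -> tgt y = src z ->
     ract s (compA x y) z = compA (ract s x (lact s y z)) (ract s y z) /\
     lact s (compA x y) z = lact s x (lact s y z)) /\
  (forall p, compA (fstA (s p)) (sndA (s p)) = compA (fstA p) (sndA p)).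

Definition is_braiding (s : cpair -> cpair) : Prop :=
  is_prebraiding s /\ bijective s.

Definition is_involutive (s : cpair -> cpair) : Prop := forall p, s (s p) = p.

Definition heap_of_group (mul : L -> L -> L) (inv : L -> L) : L -> L -> L -> L :=
  fun a b c => mul (mul a (inv b)) c.

Definition group_of_heap (h : L -> L -> L -> L) (u : L)
  : (L -> L -> L) * L * (L -> L) :=
  (fun a b => h a u b, u, fun a => h u a u).

Definition braiding_of_heap (h : L -> L -> L -> L) : cpair -> cpair :=
  fun p => (p.1.1, h p.1.1 p.1.2 p.2, p.2).

Definition heap_of_braiding (s : cpair -> cpair) : L -> L -> L -> L :=
  fun a b c => (s (a, b, c)).1.2.

End Defs.

(* Main.v *)
Require Import Defs.
From mathcomp Require Import ssreflect ssrfun ssrbool.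
From Stdlib Require Import FunctionalExtensionality.

Section G.
Variables (L : Type) (mul : L -> L -> L) (e : L) (inv : L -> L).
Hypothesis G : is_group mul e inv.

Lemma g_inv_uniq x y : mul x y = e -> y = inv x.
Proof.
case: G => A [l1 [r1 [lv rv]]] H.
by rewrite -(l1 y) -(lv x) -A H r1.
Qed.

Lemma g_inv_mul x y : inv (mul x y) = mul (inv y) (inv x).
Proof.
case: G => A [l1 [r1 [lv rv]]].
symmetry; apply: g_inv_uniq.
by rewrite -A (A y) rv l1 rv.
Qed.

Lemma g_inv_inv x : inv (inv x) = x.
Proof.
case: G => A [l1 [r1 [lv rv]]].
by symmetry; apply: g_inv_uniq; rewrite lv.
Qed.

Lemma g_inv_e : inv e = e.
Proof.
case: G => A [l1 [r1 [lv rv]]].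
by symmetry; apply: g_inv_uniq; rewrite l1.
Qed.

Lemma g_heap : is_heap (heap_of_group mul inv).
Proof.
case: G => A [l1 [r1 [lv rv]]].
rewrite /is_heap /heap_of_group; split; [|split].
- by move=> a b; rewrite -A lv r1.
- by move=> a b; rewrite rv l1.
- move=> a b c d f.
  by rewrite !A.
Qed.

Lemma g_invol_abelian :
  is_abelian mul <-> (forall a b c, heap_of_group mul inv a (heap_of_group mul inv a b c) c = b).
Proof.
have [A [l1 [r1 [lv rv]]]] := G.
rewrite /heap_of_group; split.
- move=> C a b c.
  rewrite !g_inv_mul g_inv_inv.
  rewrite (C a) -!A (A (inv a) a c) lv l1 (C b c) A lv l1.
  done.
- move=> H a b.
  have := H a b e.
  rewrite r1 r1 g_inv_mul g_inv_inv => E.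
  have : mul (mul a (mul b (inv a))) a = mul b a by rewrite E.
  by rewrite -!A lv r1.
Qed.
End G.

Section H.
Variables (L : Type) (h : L -> L -> L -> L).
Hypothesis Hh : is_heap h.

Lemma h_prebraiding : is_prebraiding (braiding_of_heap h).
Proof.
case: Hh => h1 [h2 h3].
rewrite /is_prebraiding /braiding_of_heap /lact /ract /mkP /fstA /sndA /compA /src /tgt /idA.
split; [done|split; [|split; [|split; [|split]]]].
- by case=> a b /=; rewrite h1.
- by case=> a b /=; rewrite h2.
- case=> a b [b' c] [c' d] /= E1 E2; subst => /=.
  by rewrite -h3 h2.
- case=> a b [b' c] [c' d] /= E1 E2; subst => /=.
  by rewrite h3 h1.
- done.
Qed.

Lemma h_invol :
  (is_braiding (braiding_of_heap h) /\ is_involutive (braiding_of_heap h)) <->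
  (forall a b c, h a (h a b c) c = b).
Proof.
split.
- move=> [_ I] a b c.
  by have := I (a, b, c); rewrite /braiding_of_heap /= => [[]].
- move=> H.
  have I : is_involutive (braiding_of_heap h).
    by case=> [[a b] c]; rewrite /braiding_of_heap /= H.
  split => //; split; first exact: h_prebraiding.
  by exists (braiding_of_heap h).
Qed.
End H.

Theorem corollary7p14 (L : Type) :
  (* (i) -> (ii): a group gives a heap, and the round trip returns the group *)
  (forall (mul : L -> L -> L) (e : L) (inv : L -> L),
     is_group mul e inv ->
     is_heap (heap_of_group mul inv) /\
     group_of_heap (heap_of_group mul inv) e = (mul, e, inv)) /\
  (* (ii) -> (i): a pointed heap gives a group, and the round trip returns the heap *)
  (forall (h : L -> L -> L -> L) (u : L),
     is_heap h ->
     is_group (group_of_heap h u).1.1 (group_of_heap h u).1.2 (group_of_heap h u).2 /\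
     heap_of_group (group_of_heap h u).1.1 (group_of_heap h u).2 = h) /\
  (* (ii) -> (iii): a heap gives a pre-braiding on hat(L), round trip is identity *)
  (forall h : L -> L -> L -> L,
     is_heap h ->
     is_prebraiding (braiding_of_heap h) /\
     heap_of_braiding (braiding_of_heap h) = h) /\
  (* (iii) -> (ii): a pre-braiding gives a heap, round trip is identity *)
  (forall s : cpair L -> cpair L,
     is_prebraiding s ->
     is_heap (heap_of_braiding s) /\
     braiding_of_heap (heap_of_braiding s) = s) /\
  (* abelian groups <-> involutive braidings *)
  (forall (mul : L -> L -> L) (e : L) (inv : L -> L),
     is_group mul e inv ->
     (is_abelian mul <->
      (is_braiding (braiding_of_heap (heap_of_group mul inv)) /\
       is_involutive (braiding_of_heap (heap_of_group mul inv))))) /\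
  (* involutive braidings <-> ternary operations with <a,<a,b,c>,c> = b *)
  (forall h : L -> L -> L -> L,
     is_heap h ->
     ((is_braiding (braiding_of_heap h) /\ is_involutive (braiding_of_heap h)) <->
      (forall a b c, h a (h a b c) c = b))).
Proof.
split; [|split; [|split; [|split; [|split]]]].
- move=> mul e inv G; split; first exact: (@g_heap _ _ _ _ G).
  have [A [l1 [r1 [lv rv]]]] := G.
  rewrite /group_of_heap /heap_of_group.
  congr (_, _, _).
  + apply: functional_extensionality => a; apply: functional_extensionality => b.
    by rewrite (@g_inv_e _ _ _ _ G) r1.
  + apply: functional_extensionality => a.
    by rewrite l1 r1.
- move=> h u [h1 [h2 h3]]; rewrite /group_of_heap /=; split.
  + split; [|split; [|split; [|split]]].
    * by move=> a b c; rewrite h3.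
    * by move=> a; rewrite h2.
    * by move=> a; rewrite h1.
    * by move=> a; rewrite -h3 h2 h1.
    * by move=> a; rewrite h3 h1 h2.
  + apply: functional_extensionality => a; apply: functional_extensionality => b;
    apply: functional_extensionality => c.
    by rewrite /heap_of_group h3 h1 -h3 h2.
- move=> h Hh; split; first exact: h_prebraiding.
  by apply: functional_extensionality => a; apply: functional_extensionality => b;
    apply: functional_extensionality => c.
- move=> s [ST [U1 [U2 [C1 [C2 M]]]]].
  have Sform : forall a b c, s (a, b, c) = (a, heap_of_braiding s a b c, c).
    move=> a b c; have [E1 E2] := ST (a, b, c).
    rewrite /heap_of_braiding; move: E1 E2.
    by case: (s (a, b, c)) => [[x y] z] /= -> ->.
  split.
  + have F : forall a b c, heap_of_braiding s a b c = (s (a, b, c)).1.2 by [].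
    split; [|split].
    * move=> a b; have := U1 (a, b); rewrite /mkP /idA /tgt /src /heap_of_braiding /= => ->.
      done.
    * move=> a b; have := U2 (a, b); rewrite /mkP /idA /tgt /src /heap_of_braiding /= => ->.
      done.
    * move=> a b c d f.
      have X1 := (C1 (a, b) (b, c) (c, heap_of_braiding s c d f) erefl erefl).1.
      have X2 := (C2 (heap_of_braiding s a b c, c) (c, d) (d, f) erefl erefl).2.
      move: X1 X2.
      rewrite /lact /ract /mkP /compA /fstA /sndA /= !Sform /=.
      move=> [->] [->].
      done.
  + apply: functional_extensionality => [[[a b] c]].
    by rewrite Sform.
- move=> mul e inv G.
  have HI := @h_invol _ _ (@g_heap _ _ _ _ G).
  have GA := @g_invol_abelian _ _ _ _ G.
  tauto.
- move=> h Hh; exact: (@h_invol _ _ Hh).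
Qed.
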